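(* Let $a,b,c>0$. Let $B(a,b,c)$ be the semi-infinite matrix indexed by $j,k\in\mathbb{Z}_{+}$ with entries \[ B(a,b,c)_{j,k}=\frac{\Gamma(j+k+a)}{\Gamma(j+k+b+c)}\sqrt{\frac{\Gamma(j+b)\Gamma(j+c)\Gamma(k+b)\Gamma(k+c)}{\Gamma(j+a)\,j!\,\Gamma(k+a)\,k!}}, \] and let $T(a,b,c)$ be the symmetric Jacobi matrix indexed by $\mathbb{Z}_{+}$ with entries \[ T_{j,j}=j\,(j+c-1)+(j+a)(j+b),\qquad T_{j,j+1}=T_{j+1,j}=-\sqrt{(j+1)(j+a)(j+b)(j+c)}, \] and $T_{j,k}=0$ if $|j-k|\ge 2$. Then $B(a,b,c)$ and $T(a,b,c)$ commute (as matrices, the products being well defined entrywise since $T$ is tridiagonal).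
   Context: $\mathbb{Z}_{+}=\{0,1,2,\ldots\}$ and $\Gamma$ is Euler's Gamma function. *)

(* Defs.v *)
From Stdlib Require Import Reals Factorial.
From Coquelicot Require Import Coquelicot.
Open Scope R_scope.

Definition Gamma (x : R) : R :=
  RInt_gen (fun t => Rpower t (x - 1) * exp (- t)) (at_right 0) (Rbar_locally p_infty).

Definition Bmat (a b c : R) (j k : nat) : R :=
  Gamma (INR j + INR k + a) / Gamma (INR j + INR k + b + c) *
  sqrt ((Gamma (INR j + b) * Gamma (INR j + c) * Gamma (INR k + b) * Gamma (INR k + c)) /
        (Gamma (INR j + a) * INR (fact j) * Gamma (INR k + a) * INR (fact k))).

Definition Tmat (a b c : R) (j k : nat) : R :=
  if Nat.eqb j k then INR j * (INR j + c - 1) + (INR j + a) * (INR j + b)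
  else if Nat.eqb k (S j) then - sqrt ((INR j + 1) * (INR j + a) * (INR j + b) * (INR j + c))
  else if Nat.eqb j (S k) then - sqrt ((INR k + 1) * (INR k + a) * (INR k + b) * (INR k + c))
  else 0.

(* When one factor is tridiagonal (here T) and N >= max(j,k)+1, this is the full
   (entrywise well-defined) product entry, since all omitted terms vanish. *)
Definition matmul_upto (A C : nat -> nat -> R) (N j k : nat) : R :=
  sum_f_R0 (fun l => A j l * C l k) N.

(* Main.v *)
Require Import Defs.
From Stdlib Require Import Reals Lra Lia ZArith.
From Coquelicot Require Import Coquelicot.
Open Scope R_scope.

Lemma exp_le' x y : x <= y -> exp x <= exp y.
Proof. intros [H|H]. left; now apply exp_increasing. subst; lra. Qed.

Lemma nat_above y : exists n, y <= INR n.
Proof.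
  destruct (Rle_or_lt y 0) as [H|H]. exists 0%nat; simpl; lra.
  destruct (archimed y) as [H1 H2].
  assert (Hz : (0 <= up y)%Z). { apply le_IZR. lra. }
  exists (Z.to_nat (up y)). rewrite INR_IZR_INZ, Z2Nat.id by exact Hz. lra.
Qed.

Lemma exp_mult_nat m y : exp (INR m * y) = exp y ^ m.
Proof.
  induction m. simpl. rewrite Rmult_0_l, exp_0; ring.
  rewrite S_INR, Rmult_plus_distr_r, Rmult_1_l, exp_plus, IHm. simpl. ring.
Qed.

Lemma exp_ge_pow t m : 0 < t -> (0 < m)%nat -> (t / INR m) ^ m <= exp t.
Proof.
  intros Ht Hm.
  assert (Hm' : 0 < INR m) by (apply lt_0_INR; lia).
  replace t with (INR m * (t / INR m)) at 2 by (field; lra).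
  rewrite exp_mult_nat. apply pow_incr. split.
  apply Rlt_le, Rdiv_lt_0_compat; lra.
  assert (0 < t / INR m) by (apply Rdiv_lt_0_compat; lra).
  pose proof (exp_ineq1 (t / INR m)). lra.
Qed.

Lemma tail_bound y n t : 1 <= t -> y <= INR n ->
  exp (y * ln t) * exp (- t) <= INR (n+2) ^ (n+2) / t ^ 2.
Proof.
  intros Ht Hy.
  assert (Hl : 0 <= ln t) by (rewrite <- ln_1; apply ln_le; lra).
  assert (H1 : exp (y * ln t) <= t ^ n).
  { rewrite <- (Rpower_pow n t) by lra. unfold Rpower. apply exp_le'. nra. }
  assert (Hm : 0 < INR (n+2)) by (apply lt_0_INR; lia).
  assert (H2 : exp (- t) <= / (t / INR (n+2)) ^ (n+2)).
  { rewrite exp_Ropp. apply Rinv_le_contravar.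
    apply pow_lt, Rdiv_lt_0_compat; lra. apply exp_ge_pow; [lra|lia]. }
  assert (E : / (t / INR (n+2)) ^ (n+2) * t ^ n = INR (n+2) ^ (n+2) / t ^ 2).
  { unfold Rdiv. rewrite Rpow_mult_distr, pow_inv, pow_add.
    assert (t ^ n <> 0) by (apply pow_nonzero; lra).
    assert (INR (n+2) ^ n <> 0) by (apply pow_nonzero; lra).
    field. split; [lra|]. split; auto. apply pow_nonzero; lra. }
  rewrite <- E.
  assert (0 <= exp (y * ln t)) by (left; apply exp_pos).
  assert (0 <= exp (- t)) by (left; apply exp_pos).
  assert (0 <= t ^ n) by (apply pow_le; lra).
  rewrite (Rmult_comm _ (t ^ n)). apply Rmult_le_compat; auto. 
Qed.

Lemma near0 x eps : 0 < x -> 0 < eps -> exists d, 0 < d <= 1 /\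
  forall t, 0 < t < d -> exp (x * ln t) < eps.
Proof.
  intros Hx He. exists (Rmin 1 (exp (ln eps / x))). split.
  split. apply Rmin_glb_lt; [lra| apply exp_pos]. apply Rmin_l.
  intros t [Ht1 Ht2].
  assert (Ht3 : t < exp (ln eps / x)) by (eapply Rlt_le_trans; [apply Ht2|apply Rmin_r]).
  apply ln_increasing in Ht3; auto. rewrite ln_exp in Ht3.
  rewrite <- (exp_ln eps) by auto. apply exp_increasing.
  apply (Rmult_lt_compat_l x) in Ht3; auto. field_simplify in Ht3; lra.
Qed.

Definition fG (x t : R) := Rpower t (x - 1) * exp (- t).

Lemma fG_cont x z : 0 < z -> continuous (fG x) z.
Proof. intros Hz. apply (ex_derive_continuous (K:=R_AbsRing) (V:=R_NormedModule)). unfold fG, Rpower. auto_derive. lra. Qed.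

Lemma fG_exRInt x p q : 0 < p -> 0 < q -> ex_RInt (fG x) p q.
Proof.
  intros Hp Hq. apply (ex_RInt_continuous (V:=R_CompleteNormedModule)). intros z [Hz _]. apply fG_cont.
  eapply Rlt_le_trans; [|apply Hz]. apply Rmin_glb_lt; auto.
Qed.

Lemma ball_R x (e : posreal) y : ball x e y <-> Rabs (y - x) < e.
Proof. reflexivity. Qed.

Lemma at_right0_ev d (Q : R -> Prop) : 0 < d -> (forall t, 0 < t < d -> Q t) -> at_right 0 Q.
Proof.
  intros Hd HQ. exists (mkposreal d Hd). intros y Hy Hp. apply HQ. split; auto.
  assert (Hy2 : Rabs (y - 0) < d) by exact Hy. rewrite Rminus_0_r, Rabs_pos_eq in Hy2; lra.
Qed.

Lemma pinf_ev K (Q : R -> Prop) : (forall t, K < t -> Q t) -> Rbar_locally p_infty Q.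
Proof. intros H. exists K. auto. Qed.

Lemma int_bound (f g G : R -> R) p q : p <= q ->
  (forall t, p <= t <= q -> is_derive G t (g t)) ->
  (forall t, p <= t <= q -> continuous g t) -> ex_RInt f p q ->
  (forall t, p < t < q -> 0 <= f t <= g t) -> Rabs (RInt f p q) <= G q - G p.
Proof.
  intros Hpq HG Hc Hf Hfg.
  assert (Hg : is_RInt g p q (minus (G q) (G p))).
  { apply (is_RInt_derive (V:=R_CompleteNormedModule)); rewrite Rmin_left, Rmax_right by auto; auto. }
  assert (H0 : 0 <= RInt f p q).
  { apply RInt_ge_0; auto. intros t Ht; apply Hfg; auto. }
  assert (H1 : RInt f p q <= RInt g p q).
  { apply RInt_le; auto. eexists; eauto. intros t Ht; apply Hfg; auto. }
  rewrite (is_RInt_unique (V:=R_CompleteNormedModule) _ _ _ _ Hg) in H1.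
  rewrite Rabs_pos_eq by auto. exact H1.
Qed.

Lemma int_sym (f : R -> R) (S : R -> Prop) B :
  (forall p q, S p -> S q -> ex_RInt f p q) ->
  (forall p q, p <= q -> S p -> S q -> Rabs (RInt f p q) <= B) ->
  forall p q, S p -> S q -> Rabs (RInt f p q) <= B.
Proof.
  intros He H p q Hp Hq. destruct (Rle_or_lt p q) as [H'|H']. auto.
  rewrite <- opp_RInt_swap by (apply He; auto). change (Rabs (- RInt f q p) <= B).
  rewrite Rabs_Ropp. apply H; auto; lra.
Qed.

Lemma Chasles_R (f : R -> R) a b c : ex_RInt f a b -> ex_RInt f b c ->
  RInt f a c = RInt f a b + RInt f b c.
Proof. intros H1 H2. rewrite <- (RInt_Chasles f a b c) by auto. reflexivity. Qed.

Lemma exp_m1 x t : 0 < t -> exp ((x - 1) * ln t) = exp (x * ln t) / t.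
Proof.
  intros Ht. replace ((x - 1) * ln t) with (x * ln t + - ln t) by ring.
  rewrite exp_plus, exp_Ropp, exp_ln by auto. reflexivity.
Qed.

Lemma Gamma_ex x : 0 < x -> ex_RInt_gen (fG x) (at_right 0) (Rbar_locally p_infty).
Proof.
  intros Hx. unfold ex_RInt_gen, is_RInt_gen.
  assert (Hev : filter_prod (at_right 0) (Rbar_locally p_infty) (fun ab : R * R =>
     (exists y : R, is_RInt (fG x) (fst ab) (snd ab) y) /\
     (forall y1 y2 : R, is_RInt (fG x) (fst ab) (snd ab) y1 -> is_RInt (fG x) (fst ab) (snd ab) y2 -> y1 = y2))).
  { apply Filter_prod with (fun t => 0 < t) (fun t => 0 < t).
    apply (at_right0_ev 1); [lra| tauto]. apply (pinf_ev 0); auto.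
    intros a b Ha Hb; simpl; split.
    exists (RInt (fG x) a b). apply (RInt_correct (V:=R_CompleteNormedModule)), fG_exRInt; auto.
    intros y1 y2 H1 H2. rewrite <- (is_RInt_unique (V:=R_CompleteNormedModule) _ _ _ _ H1).
    rewrite <- (is_RInt_unique (V:=R_CompleteNormedModule) _ _ _ _ H2). reflexivity. }
  apply (proj1 (filterlimi_locally_cauchy (U:=R_CompleteSpace) (F:=filter_prod (at_right 0) (Rbar_locally p_infty)) (fun ab y => is_RInt (fG x) (fst ab) (snd ab) y) Hev)).
  intros eps.
  destruct (nat_above (x - 1)) as [n Hn].
  set (C := INR (n+2) ^ (n+2)).
  assert (HC : 0 < C) by (apply pow_lt, lt_0_INR; lia).
  assert (He : 0 < eps) by apply cond_pos.
  destruct (near0 x (x * eps / 4)) as [d [Hd Hd']]; auto.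
  { apply Rmult_lt_0_compat; [|lra]. apply Rmult_lt_0_compat; lra. }
  set (K := Rmax 1 (4 * C / eps)).
  assert (HK1 : 1 <= K) by apply Rmax_l.
  assert (HK2 : 4 * C / eps <= K) by apply Rmax_r.
  assert (Small : forall p q, 0 < p < d -> 0 < q < d -> Rabs (RInt (fG x) p q) <= eps / 4).
  { apply int_sym. intros p q Hp Hq; apply fG_exRInt; tauto.
    intros p q Hpq Hp Hq.
    apply Rle_trans with (exp (x * ln q) / x - exp (x * ln p) / x).
    apply (int_bound _ (fun t => exp ((x - 1) * ln t)) (fun t => exp (x * ln t) / x)); auto.
    - intros t Ht. auto_derive. lra. rewrite exp_m1 by lra. field. lra.
    - intros t Ht. apply (ex_derive_continuous (K:=R_AbsRing) (V:=R_NormedModule)). auto_derive. lra.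
    - apply fG_exRInt; tauto.
    - intros t Ht. unfold fG, Rpower. split.
      left; apply Rmult_lt_0_compat; apply exp_pos.
      rewrite <- (Rmult_1_r (exp ((x-1) * ln t))) at 2.
      apply Rmult_le_compat_l. left; apply exp_pos.
      rewrite <- exp_0. apply exp_le'. lra.
    - assert (0 < exp (x * ln p) / x) by (apply Rdiv_lt_0_compat; auto; apply exp_pos).
      assert (exp (x * ln q) < x * eps / 4) by (apply Hd'; lra).
      assert (exp (x * ln q) / x < eps / 4).
      { apply (Rmult_lt_reg_l x); auto. field_simplify; lra. }
      lra. }
  assert (Large : forall p q, K < p -> K < q -> Rabs (RInt (fG x) p q) <= eps / 4).
  { apply int_sym. intros p q Hp Hq; apply fG_exRInt; lra.
    intros p q Hpq Hp Hq.
    apply Rle_trans with (- C / q - - C / p).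
    apply (int_bound _ (fun t => C / t ^ 2) (fun t => - C / t)); auto.
    - intros t Ht. auto_derive. lra. field. lra.
    - intros t Ht. apply (ex_derive_continuous (K:=R_AbsRing) (V:=R_NormedModule)). auto_derive. apply Rgt_not_eq; nra.
    - apply fG_exRInt; lra.
    - intros t Ht. unfold fG, Rpower. split.
      left; apply Rmult_lt_0_compat; apply exp_pos.
      apply tail_bound; lra.
    - assert (0 < C / q) by (apply Rdiv_lt_0_compat; lra).
      assert (C / p <= eps / 4).
      { assert (E4 : 4 * C = eps * (4 * C / eps)) by (field; lra).
        assert (H4 : 4 * C < eps * p) by (rewrite E4; apply Rmult_lt_compat_l; lra).
        apply Rmult_le_reg_r with p; [lra|]. unfold Rdiv.
        rewrite Rmult_assoc, Rinv_l, Rmult_1_r by lra. lra. }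
      unfold Rdiv in *. lra. }
  exists (fun ab => 0 < fst ab < d /\ K < snd ab). split.
  { apply Filter_prod with (fun t => 0 < t < d) (fun t => K < t).
    apply (at_right0_ev d); [lra| tauto]. apply (pinf_ev K); auto.
    intros a b Ha Hb; simpl; auto. }
  intros [u1 u2] [v1 v2] [Hu1 Hu2] [Hv1 Hv2] u' v' Hu' Hv'. simpl in *.
  apply (is_RInt_unique (V:=R_CompleteNormedModule)) in Hu'. apply (is_RInt_unique (V:=R_CompleteNormedModule)) in Hv'.
  apply ball_R. rewrite <- Hu', <- Hv'.
  rewrite (Chasles_R _ v1 u1 v2), (Chasles_R _ u1 u2 v2) by (apply fG_exRInt; lra).
  replace (RInt (fG x) v1 u1 + (RInt (fG x) u1 u2 + RInt (fG x) u2 v2) - RInt (fG x) u1 u2)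
    with (RInt (fG x) v1 u1 + RInt (fG x) u2 v2) by ring.
  eapply Rle_lt_trans. apply Rabs_triang.
  assert (Rabs (RInt (fG x) v1 u1) <= eps / 4) by (apply Small; lra).
  assert (Rabs (RInt (fG x) u2 v2) <= eps / 4) by (apply Large; lra).
  lra.
Qed.

Definition hG (x t : R) := - (exp (x * ln t) * exp (- t)).

Lemma Dh x t : 0 < t -> is_derive (hG x) t (fG (x + 1) t - x * fG x t).
Proof.
  intros Ht. unfold hG, fG, Rpower. auto_derive. auto.
  replace (x + 1 - 1) with x by ring. rewrite exp_m1 by auto. field. lra.
Qed.

Lemma Gamma_succ x : 0 < x -> Gamma (x + 1) = x * Gamma x.
Proof.
  intros Hx.
  pose proof (RInt_gen_correct (V:=R_CompleteNormedModule) _ (Gamma_ex x Hx)) as E.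
  assert (D : is_RInt_gen (Derive (hG x)) (at_right 0) (Rbar_locally p_infty) (0 - 0)).
  { apply is_RInt_gen_Derive.
    - apply Filter_prod with (fun t => 0 < t) (fun t => 0 < t).
      apply (at_right0_ev 1); [lra| tauto]. apply (pinf_ev 0); auto.
      intros a b Ha Hb y Hy. simpl in Hy.
      eexists. apply Dh.
      eapply Rlt_le_trans; [|apply Hy]. apply Rmin_glb_lt; auto.
    - apply Filter_prod with (fun t => 0 < t) (fun t => 0 < t).
      apply (at_right0_ev 1); [lra| tauto]. apply (pinf_ev 0); auto.
      intros a b Ha Hb y Hy. simpl in Hy.
      assert (Hy0 : 0 < y).
      { eapply Rlt_le_trans; [|apply Hy]. apply Rmin_glb_lt; auto. }
      apply (continuous_ext_loc _ (fun t => fG (x + 1) t - x * fG x t)).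
      + assert (Hy2 : 0 < y / 2) by lra.
        exists (mkposreal _ Hy2). intros u Hu.
        assert (Hu2 : Rabs (u - y) < y / 2) by exact Hu.
        symmetry. apply is_derive_unique, Dh.
        apply Rabs_def2 in Hu2. lra.
      + apply (ex_derive_continuous (K:=R_AbsRing) (V:=R_NormedModule)).
        unfold fG, Rpower. auto_derive. lra.
    - apply filterlim_locally. intros eps.
      destruct (near0 x eps) as [d [Hd Hd']]; auto. apply cond_pos.
      apply (at_right0_ev d); [lra|]. intros t Ht.
      apply ball_R. unfold hG. rewrite Rminus_0_r, Rabs_Ropp, Rabs_pos_eq.
      2: left; apply Rmult_lt_0_compat; apply exp_pos.
      apply Rle_lt_trans with (exp (x * ln t)); [|apply Hd'; auto].
      rewrite <- (Rmult_1_r (exp (x * ln t))) at 2.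
      apply Rmult_le_compat_l. left; apply exp_pos.
      rewrite <- exp_0. apply exp_le'. lra.
    - apply filterlim_locally. intros eps.
      destruct (nat_above x) as [n Hn].
      set (C := INR (n+2) ^ (n+2)).
      assert (HC : 0 < C) by (apply pow_lt, lt_0_INR; lia).
      assert (He : 0 < eps) by apply cond_pos.
      apply (pinf_ev (Rmax 1 (C / eps))). intros t Ht.
      assert (Ht1 : 1 < t) by (eapply Rle_lt_trans; [apply Rmax_l|apply Ht]).
      assert (Ht2 : C / eps < t) by (eapply Rle_lt_trans; [apply Rmax_r|apply Ht]).
      apply ball_R. unfold hG. rewrite Rminus_0_r, Rabs_Ropp, Rabs_pos_eq.
      2: left; apply Rmult_lt_0_compat; apply exp_pos.
      eapply Rle_lt_trans. apply tail_bound; [lra|apply Hn].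
      assert (E1 : C = eps * (C / eps)) by (field; lra).
      assert (H4 : C < eps * t) by (rewrite E1; apply Rmult_lt_compat_l; lra).
      apply Rmult_lt_reg_r with (t ^ 2). apply pow_lt; lra.
      unfold Rdiv. rewrite Rmult_assoc, Rinv_l, Rmult_1_r.
      2: apply pow_nonzero; lra.
      simpl. assert (eps * t < eps * (t * t)) by (apply Rmult_lt_compat_l; nra). fold C. lra. }
  pose proof (is_RInt_gen_plus _ _ _ _ D (is_RInt_gen_scal _ x _ E)) as P.
  assert (Q : is_RInt_gen (fG (x + 1)) (at_right 0) (Rbar_locally p_infty)
     (plus (0 - 0) (scal x (RInt_gen (fG x) (at_right 0) (Rbar_locally p_infty))))).
  { revert P. apply is_RInt_gen_ext.
    apply Filter_prod with (fun t => 0 < t) (fun t => 0 < t).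
    apply (at_right0_ev 1); [lra| tauto]. apply (pinf_ev 0); auto.
    intros a b Ha Hb y Hy. simpl in Hy.
    assert (Hy0 : 0 < y).
    { eapply Rlt_le_trans; [|apply Rlt_le, Hy]. apply Rmin_glb_lt; auto. }
    rewrite (is_derive_unique _ _ _ (Dh x y Hy0)).
    change (fG (x + 1) y - x * fG x y + x * fG x y = fG (x + 1) y). ring. }
  change (RInt_gen (fG (x + 1)) (at_right 0) (Rbar_locally p_infty) =
          x * RInt_gen (fG x) (at_right 0) (Rbar_locally p_infty)).
  rewrite (is_RInt_gen_unique _ _ Q).
  change (0 - 0 + x * RInt_gen (fG x) (at_right 0) (Rbar_locally p_infty) =
          x * RInt_gen (fG x) (at_right 0) (Rbar_locally p_infty)). ring.
Qed.

Definition Pw a b c j := Gamma (INR j + b) * Gamma (INR j + c) / (Gamma (INR j + a) * INR (fact j)).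
Definition rr a b c k := (INR k + b) * (INR k + c) / ((INR k + a) * (INR k + 1)).
Definition sq a b c j k := sqrt (Pw a b c j * Pw a b c k).
Definition gg a b c s := Gamma (s + a) / Gamma (s + b + c).
Definition tq a b c k := sqrt ((INR k + 1) * (INR k + a) * (INR k + b) * (INR k + c)).

Lemma Gamma_S y j : 0 < y -> Gamma (INR (S j) + y) = (INR j + y) * Gamma (INR j + y).
Proof.
  intros Hy. rewrite S_INR. replace (INR j + 1 + y) with ((INR j + y) + 1) by ring.
  apply Gamma_succ. pose proof (pos_INR j). lra.
Qed.

Lemma Pw_succ a b c j : 0 < a -> 0 < b -> 0 < c -> Pw a b c (S j) = Pw a b c j * rr a b c j.
Proof.
  intros ha hb hc. unfold Pw, rr. rewrite !Gamma_S by auto.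
  rewrite fact_simpl, mult_INR, S_INR. unfold Rdiv. rewrite !Rinv_mult. ring.
Qed.

Lemma rr_pos a b c k : 0 < a -> 0 < b -> 0 < c -> 0 < rr a b c k.
Proof.
  intros ha hb hc. pose proof (pos_INR k). unfold rr.
  apply Rdiv_lt_0_compat; apply Rmult_lt_0_compat; lra.
Qed.

Lemma Pw_rel a b c j : 0 < a -> 0 < b -> 0 < c -> exists R, 0 < R /\ Pw a b c j = Pw a b c 0 * R.
Proof.
  intros ha hb hc. induction j as [|j [R [HR E]]].
  exists 1. split; [lra|ring].
  exists (R * rr a b c j). split. apply Rmult_lt_0_compat; auto. apply rr_pos; auto.
  rewrite Pw_succ, E by auto. ring.
Qed.

Lemma PP_nonneg a b c j k : 0 < a -> 0 < b -> 0 < c -> 0 <= Pw a b c j * Pw a b c k.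
Proof.
  intros ha hb hc. destruct (Pw_rel a b c j) as [R1 [H1 E1]]; auto.
  destruct (Pw_rel a b c k) as [R2 [H2 E2]]; auto. rewrite E1, E2.
  replace (Pw a b c 0 * R1 * (Pw a b c 0 * R2)) with ((Pw a b c 0 * Pw a b c 0) * (R1 * R2)) by ring.
  apply Rmult_le_pos. apply Rle_0_sqr. nra.
Qed.

Lemma sq_succ_r a b c j k : 0 < a -> 0 < b -> 0 < c ->
  sq a b c j (S k) = sq a b c j k * sqrt (rr a b c k).
Proof.
  intros ha hb hc. unfold sq. rewrite Pw_succ by auto. rewrite <- sqrt_mult.
  f_equal; ring. apply PP_nonneg; auto. left; apply rr_pos; auto.
Qed.

Lemma sq_succ_l a b c j k : 0 < a -> 0 < b -> 0 < c ->
  sq a b c (S j) k = sq a b c j k * sqrt (rr a b c j).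
Proof.
  intros ha hb hc. unfold sq. rewrite Pw_succ by auto. rewrite <- sqrt_mult.
  f_equal; ring. apply PP_nonneg; auto. left; apply rr_pos; auto.
Qed.

Lemma tq_eq a b c k : 0 < a -> 0 < b -> 0 < c ->
  tq a b c k = sqrt (rr a b c k) * ((INR k + a) * (INR k + 1)).
Proof.
  intros ha hb hc. pose proof (pos_INR k). unfold tq.
  replace ((INR k + 1) * (INR k + a) * (INR k + b) * (INR k + c)) with
    (rr a b c k * (((INR k + a) * (INR k + 1)) * ((INR k + a) * (INR k + 1)))).
  assert (Hp : 0 <= (INR k + a) * (INR k + 1)) by (apply Rmult_le_pos; lra).
  rewrite sqrt_mult, sqrt_square; auto.
  left; apply rr_pos; auto. apply Rmult_le_pos; auto.
  unfold rr. field. split; lra.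
Qed.

Lemma L1 a b c j k : 0 < a -> 0 < b -> 0 < c ->
  sq a b c j (S k) * tq a b c k = sq a b c j k * ((INR k + b) * (INR k + c)).
Proof.
  intros ha hb hc. pose proof (pos_INR k). rewrite sq_succ_r, tq_eq by auto.
  assert (Hq : sqrt (rr a b c k) * sqrt (rr a b c k) = rr a b c k).
  { apply sqrt_sqrt. left; apply rr_pos; auto. }
  transitivity (sq a b c j k * (sqrt (rr a b c k) * sqrt (rr a b c k)) * ((INR k + a) * (INR k + 1))).
  ring. rewrite Hq. unfold rr. field. split; lra.
Qed.

Lemma L2 a b c j k : 0 < a -> 0 < b -> 0 < c ->
  sq a b c j k * tq a b c k = sq a b c j (S k) * ((INR k + a) * (INR k + 1)).
Proof. intros ha hb hc. rewrite sq_succ_r, tq_eq by auto. ring. Qed.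

Lemma L1' a b c j k : 0 < a -> 0 < b -> 0 < c ->
  sq a b c (S j) k * tq a b c j = sq a b c j k * ((INR j + b) * (INR j + c)).
Proof.
  intros ha hb hc. pose proof (pos_INR j). rewrite sq_succ_l, tq_eq by auto.
  assert (Hq : sqrt (rr a b c j) * sqrt (rr a b c j) = rr a b c j).
  { apply sqrt_sqrt. left; apply rr_pos; auto. }
  transitivity (sq a b c j k * (sqrt (rr a b c j) * sqrt (rr a b c j)) * ((INR j + a) * (INR j + 1))).
  ring. rewrite Hq. unfold rr. field. split; lra.
Qed.

Lemma L2' a b c j k : 0 < a -> 0 < b -> 0 < c ->
  sq a b c j k * tq a b c j = sq a b c (S j) k * ((INR j + a) * (INR j + 1)).
Proof. intros ha hb hc. rewrite sq_succ_l, tq_eq by auto. ring. Qed.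

Lemma Bmat_eq a b c j k : Bmat a b c j k = gg a b c (INR j + INR k) * sq a b c j k.
Proof.
  unfold Bmat, gg, sq, Pw. f_equal. f_equal. unfold Rdiv. rewrite !Rinv_mult. ring.
Qed.

Lemma T_diag a b c j : Tmat a b c j j = INR j * (INR j + c - 1) + (INR j + a) * (INR j + b).
Proof. unfold Tmat. rewrite Nat.eqb_refl. reflexivity. Qed.

Lemma T_up a b c k : Tmat a b c k (S k) = - tq a b c k.
Proof.
  unfold Tmat. replace (k =? S k)%nat with false by (symmetry; apply Nat.eqb_neq; lia).
  rewrite Nat.eqb_refl. reflexivity.
Qed.

Lemma T_down a b c k : Tmat a b c (S k) k = - tq a b c k.
Proof.
  unfold Tmat. replace (S k =? k)%nat with false by (symmetry; apply Nat.eqb_neq; lia).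
  replace (k =? S (S k))%nat with false by (symmetry; apply Nat.eqb_neq; lia).
  rewrite Nat.eqb_refl. reflexivity.
Qed.

Lemma T_zero a b c l k : l <> k -> l <> S k -> S l <> k -> Tmat a b c l k = 0.
Proof.
  intros H1 H2 H3. unfold Tmat.
  replace (l =? k)%nat with false by (symmetry; apply Nat.eqb_neq; lia).
  replace (k =? S l)%nat with false by (symmetry; apply Nat.eqb_neq; lia).
  replace (l =? S k)%nat with false by (symmetry; apply Nat.eqb_neq; lia).
  reflexivity.
Qed.

Lemma sum_ext_zero (h : nat -> R) k d :
  (forall l, (S k < l)%nat -> h l = 0) -> sum_f_R0 h (S k + d) = sum_f_R0 h (S k).
Proof.
  intros H. induction d. rewrite Nat.add_0_r. reflexivity.
  replace (S k + S d)%nat with (S (S k + d)) by lia. rewrite tech5.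
  rewrite IHd, H by lia. ring.
Qed.

Lemma sum_three (h : nat -> R) k N : (S k <= N)%nat ->
  (forall l, l <> k -> l <> S k -> S l <> k -> h l = 0) ->
  sum_f_R0 h N = (match k with 0%nat => 0 | S k' => h k' end) + h k + h (S k).
Proof.
  intros HN H.
  replace N with (S k + (N - S k))%nat by lia.
  rewrite (sum_ext_zero h k (N - S k)) by (intros; apply H; lia).
  destruct k as [|k'].
  - simpl. ring.
  - destruct k' as [|k''].
    + simpl. ring.
    + simpl sum_f_R0.
      rewrite (sum_eq_R0 h k''). ring.
      intros l Hl. apply H; lia.
Qed.

Definition form a b c (J K S g0 g1 g2 : R) :=
  S * (- g0 * (K * (K - 1 + a)) + g1 * (K * (K + c - 1) + (K + a) * (K + b))
       - g2 * ((K + b) * (K + c))).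

Lemma BT_form a b c j k N : 0 < a -> 0 < b -> 0 < c -> (S k <= N)%nat ->
  matmul_upto (Bmat a b c) (Tmat a b c) N j k =
  form a b c (INR j) (INR k) (sq a b c j k) (gg a b c (INR j + INR k - 1))
    (gg a b c (INR j + INR k)) (gg a b c (INR j + INR k + 1)).
Proof.
  intros ha hb hc HN. unfold matmul_upto, form.
  rewrite (sum_three _ k N) by (auto; intros; rewrite T_zero; auto; ring).
  rewrite T_diag, T_down.
  assert (E2 : Bmat a b c j (S k) * - tq a b c k =
     - gg a b c (INR j + INR k + 1) * sq a b c j k * ((INR k + b) * (INR k + c))).
  { rewrite Bmat_eq.
    transitivity (- gg a b c (INR j + INR (S k)) * (sq a b c j (S k) * tq a b c k)); [ring|].
    rewrite L1 by auto. rewrite (S_INR k).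
    replace (INR j + (INR k + 1)) with (INR j + INR k + 1) by ring. ring. }
  rewrite E2, Bmat_eq.
  destruct k as [|k'].
  - change (INR 0) with 0. ring.
  - rewrite T_up, Bmat_eq.
    assert (E1 : sq a b c j k' * tq a b c k' = sq a b c j (S k') * ((INR k' + a) * (INR k' + 1)))
      by (apply L2; auto).
    replace (INR j + INR (S k') - 1) with (INR j + INR k') by (rewrite S_INR; ring).
    transitivity (- gg a b c (INR j + INR k') * (sq a b c j k' * tq a b c k') +
      gg a b c (INR j + INR (S k')) * sq a b c j (S k') *
      (INR (S k') * (INR (S k') + c - 1) + (INR (S k') + a) * (INR (S k') + b)) +
      - gg a b c (INR j + INR (S k') + 1) * sq a b c j (S k') * ((INR (S k') + b) * (INR (S k') + c))).
    ring. rewrite E1, (S_INR k'). ring.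
Qed.

Lemma TB_form a b c j k N : 0 < a -> 0 < b -> 0 < c -> (S j <= N)%nat ->
  matmul_upto (Tmat a b c) (Bmat a b c) N j k =
  form a b c (INR k) (INR j) (sq a b c j k) (gg a b c (INR j + INR k - 1))
    (gg a b c (INR j + INR k)) (gg a b c (INR j + INR k + 1)).
Proof.
  intros ha hb hc HN. unfold matmul_upto, form.
  rewrite (sum_three _ j N) by (auto; intros; rewrite (T_zero a b c j l); auto; try ring; lia).
  rewrite T_diag, T_up.
  assert (E2 : - tq a b c j * Bmat a b c (S j) k =
     - gg a b c (INR j + INR k + 1) * sq a b c j k * ((INR j + b) * (INR j + c))).
  { rewrite Bmat_eq.
    transitivity (- gg a b c (INR (S j) + INR k) * (sq a b c (S j) k * tq a b c j)); [ring|].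
    rewrite L1' by auto. rewrite (S_INR j).
    replace (INR j + 1 + INR k) with (INR j + INR k + 1) by ring. ring. }
  rewrite E2, Bmat_eq.
  destruct j as [|j'].
  - change (INR 0) with 0. ring.
  - rewrite T_down, Bmat_eq.
    assert (E1 : sq a b c j' k * tq a b c j' = sq a b c (S j') k * ((INR j' + a) * (INR j' + 1)))
      by (apply L2'; auto).
    replace (INR (S j') + INR k - 1) with (INR j' + INR k) by (rewrite S_INR; ring).
    transitivity (- gg a b c (INR j' + INR k) * (sq a b c j' k * tq a b c j') +
      gg a b c (INR (S j') + INR k) * sq a b c (S j') k *
      (INR (S j') * (INR (S j') + c - 1) + (INR (S j') + a) * (INR (S j') + b)) +
      - gg a b c (INR (S j') + INR k + 1) * sq a b c (S j') k * ((INR (S j') + b) * (INR (S j') + c))).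
    ring. rewrite E1, (S_INR j'). ring.
Qed.

Lemma gg_succ a b c s : 0 < a -> 0 < b -> 0 < c -> 0 <= s ->
  gg a b c (s + 1) = gg a b c s * (s + a) / (s + b + c).
Proof.
  intros ha hb hc hs. unfold gg.
  replace (s + 1 + a) with ((s + a) + 1) by ring.
  replace (s + 1 + b + c) with ((s + b + c) + 1) by ring.
  rewrite !Gamma_succ by lra. unfold Rdiv. rewrite !Rinv_mult. ring.
Qed.

Lemma core a b c J K S u : 0 < a -> 0 < b -> 0 < c -> 0 <= J -> 0 <= K -> 1 <= J + K ->
  form a b c J K S u (u * (J + K - 1 + a) / (J + K - 1 + b + c))
    (u * (J + K - 1 + a) / (J + K - 1 + b + c) * (J + K + a) / (J + K + b + c)) =
  form a b c K J S u (u * (J + K - 1 + a) / (J + K - 1 + b + c))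
    (u * (J + K - 1 + a) / (J + K - 1 + b + c) * (J + K + a) / (J + K + b + c)).
Proof.
  intros. unfold form. field. split; lra.
Qed.

Theorem mainTheorem2 (a b c : R) (ha : 0 < a) (hb : 0 < b) (hc : 0 < c) :
  forall (j k N : nat), (S j <= N)%nat -> (S k <= N)%nat ->
    matmul_upto (Bmat a b c) (Tmat a b c) N j k =
    matmul_upto (Tmat a b c) (Bmat a b c) N j k.
Proof.
  intros j k N Hj Hk. rewrite BT_form, TB_form by auto.
  destruct (Nat.eq_dec j k) as [->|Hne]. reflexivity.
  assert (Hs : 1 <= INR j + INR k).
  { rewrite <- plus_INR. apply (le_INR 1). lia. }
  pose proof (pos_INR j). pose proof (pos_INR k).
  assert (G2 : gg a b c (INR j + INR k + 1) =
     gg a b c (INR j + INR k) * (INR j + INR k + a) / (INR j + INR k + b + c))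
    by (apply gg_succ; auto; lra).
  assert (G1 : gg a b c (INR j + INR k) =
     gg a b c (INR j + INR k - 1) * (INR j + INR k - 1 + a) / (INR j + INR k - 1 + b + c)).
  { rewrite <- gg_succ by (auto; lra). f_equal. ring. }
  rewrite G2, G1. apply core; auto.
Qed.
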